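(* Assume the standing assumptions in the context. Let $v=(v_1,v_2)$ be the bounded constrained viscosity solution on $[\underline{x},+\infty)$ of the system $$\rho v_j(x)=H(x,y_j,Dv_j(x))+\lambda_j\big(v_{\bar\jmath}(x)-v_j(x)\big),\qquad j=1,2,\ \bar\jmath=3-j.$$ Then each $v_j$ is Lipschitz continuous on $[\underline{x},+\infty)$.
   Context: Standing assumptions: $\rho>0$; $-\infty<r<\rho$; $0<y_1<y_2$; $\gamma>1$; $\underline{x}\le0$ with $\rho\underline{x}+y_j>0$ for $j=1,2$; $\lambda_1,\lambda_2\ge0$ constants. Utility $u(c)=\frac{c^{1-\gamma}}{1-\gamma}$; Hamiltonian $H(x,y_j,p)=\sup_{c\ge0}\{u(c)+(rx+y_j-c)p\}$, equal to $(rx+y_j)p+\frac{\gamma}{1-\gamma}p^{1-1/\gamma}$ for $p\ge0$ and $+\infty$ for $p<0$. Viscosity subsolution on $S\subseteq[\underline{x},\infty)$: u.s.c. pair $v$ such that whenever $\varphi$ smooth, $j\in\{1,2\}$, and $v_j-\varphi$ has a local max (relative to $[\underline{x},\infty)$) at $x_0\in S$, then $\rho v_j(x_0)\le H(x_0,y_j,D\varphi(x_0))+\lambda_j(v_{\bar\jmath}(x_0)-v_j(x_0))$. Viscosity supersolution on $S$: l.s.c. pair with the reverse inequality at local minima $x_0\in S$. A constrained viscosity solution is a continuous pair that is a viscosity supersolution on $(\underline{x},\infty)$ and a viscosity subsolution on $[\underline{x},\infty)$ (such a bounded solution is unique). *)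

(* Defs.v *)
From Stdlib Require Import Reals Lra.
From Coquelicot Require Import Coquelicot.
Open Scope R_scope.

(* Index j : bool, with true = regime 1 and false = regime 2; jbar = negb j. *)

(* p^(1-1/gamma) for p >= 0, with the convention 0^a = 0 (a = 1-1/gamma > 0). *)
Definition powp (p a : R) : R := if Req_EM_T p 0 then 0 else Rpower p a.

(* Hamiltonian H(x,y,p) = sup_{c>=0} {u(c) + (r x + y - c) p}, in closed form:
   (r x + y) p + gamma/(1-gamma) p^(1-1/gamma) if p >= 0, +infinity if p < 0. *)
Definition Ham (r gamma x y p : R) : Rbar :=
  if Rle_dec 0 p
  then Finite ((r * x + y) * p + gamma / (1 - gamma) * powp p (1 - 1 / gamma))
  else p_infty.

Definition smooth (phi : R -> R) : Prop := forall n x, ex_derive_n phi n x.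

Definition loc_max_rel (xl : R) (f : R -> R) (x0 : R) : Prop :=
  exists d, 0 < d /\ forall x, xl <= x -> Rabs (x - x0) < d -> f x <= f x0.
Definition loc_min_rel (xl : R) (f : R -> R) (x0 : R) : Prop :=
  exists d, 0 < d /\ forall x, xl <= x -> Rabs (x - x0) < d -> f x0 <= f x.

Definition usc_on (xl : R) (f : R -> R) : Prop :=
  forall x0, xl <= x0 -> forall e, 0 < e -> exists d, 0 < d /\
    forall x, xl <= x -> Rabs (x - x0) < d -> f x < f x0 + e.
Definition lsc_on (xl : R) (f : R -> R) : Prop :=
  forall x0, xl <= x0 -> forall e, 0 < e -> exists d, 0 < d /\
    forall x, xl <= x -> Rabs (x - x0) < d -> f x0 - e < f x.
Definition cont_on (xl : R) (f : R -> R) : Prop :=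
  forall x0, xl <= x0 -> forall e, 0 < e -> exists d, 0 < d /\
    forall x, xl <= x -> Rabs (x - x0) < d -> Rabs (f x - f x0) < e.

Definition visc_sub (rho r gamma xl : R) (y lam : bool -> R)
  (S : R -> Prop) (v : bool -> R -> R) : Prop :=
  (forall j, usc_on xl (v j)) /\
  forall (phi : R -> R) (j : bool) (x0 : R),
    smooth phi -> S x0 -> loc_max_rel xl (fun x => v j x - phi x) x0 ->
    Rbar_le (Finite (rho * v j x0))
      (Rbar_plus (Ham r gamma x0 (y j) (Derive phi x0))
                 (Finite (lam j * (v (negb j) x0 - v j x0)))).

Definition visc_super (rho r gamma xl : R) (y lam : bool -> R)
  (S : R -> Prop) (v : bool -> R -> R) : Prop :=
  (forall j, lsc_on xl (v j)) /\
  forall (phi : R -> R) (j : bool) (x0 : R),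
    smooth phi -> S x0 -> loc_min_rel xl (fun x => v j x - phi x) x0 ->
    Rbar_le (Rbar_plus (Ham r gamma x0 (y j) (Derive phi x0))
                       (Finite (lam j * (v (negb j) x0 - v j x0))))
            (Finite (rho * v j x0)).

Definition constrained_visc_sol (rho r gamma xl : R) (y lam : bool -> R)
  (v : bool -> R -> R) : Prop :=
  (forall j, cont_on xl (v j)) /\
  visc_super rho r gamma xl y lam (fun x => xl < x) v /\
  visc_sub rho r gamma xl y lam (fun x => xl <= x) v.

Definition bounded_on (xl : R) (v : bool -> R -> R) : Prop :=
  exists M, forall j x, xl <= x -> Rabs (v j x) <= M.

Definition lipschitz_on (xl : R) (f : R -> R) : Prop :=
  exists L, forall x x', xl <= x -> xl <= x' -> Rabs (f x - f x') <= L * Rabs (x - x').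

(* Main.v *)
Require Import Defs.
From Stdlib Require Import Reals Lra.
From Coquelicot Require Import Coquelicot.
Open Scope R_scope.

Lemma quad_smooth A B C : smooth (fun x => A + B*x + C*(x*x)).
Proof.
  intros n x.
  apply ex_derive_n_ext with (f := fun x => (A + B * x^1) + C * x^2).
  { intros t; simpl; ring. }
  apply ex_derive_n_plus.
  - apply filter_forall; intros t k _.
    apply ex_derive_n_plus.
    + apply filter_forall; intros; apply ex_derive_n_const.
    + apply filter_forall; intros; apply ex_derive_n_scal_l, ex_derive_n_pow.
  - apply filter_forall; intros t k _.
    apply ex_derive_n_scal_l, ex_derive_n_pow.
Qed.

Lemma quad_derive A B C x : Derive (fun x => A + B*x + C*(x*x)) x = B + 2*C*x.
Proof.
  apply is_derive_unique. auto_derive; [exact I| ring].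
Qed.

Definition extf (xl : R) (f : R -> R) (x : R) := f (Rmax xl x).

Lemma extf_eq xl f x : xl <= x -> extf xl f x = f x.
Proof. intros H; unfold extf; rewrite Rmax_right; auto. Qed.

Lemma extf_cont xl f : cont_on xl f -> forall x, continuity_pt (extf xl f) x.
Proof.
  intros Hc x. apply continuity_pt_locally. intros eps.
  destruct (Hc (Rmax xl x) (Rmax_l _ _) eps (cond_pos eps)) as [d [Hd H]].
  exists (mkposreal d Hd). intros u Hu.
  unfold extf. apply H. apply Rmax_l.
  change (Rabs (u - x) < d) in Hu.
  unfold Rmax; destruct (Rle_dec xl u), (Rle_dec xl x); 
  rewrite ?Rminus_diag, ?Rabs_R0; try lra;
  (apply Rle_lt_trans with (2 := Hu); unfold Rabs; destruct (Rcase_abs _), (Rcase_abs _); lra).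
Qed.

Lemma Rabs_le_inv a b : Rabs a <= b -> -b <= a <= b.
Proof. unfold Rabs; destruct (Rcase_abs a); lra. Qed.

Lemma lin_smooth s : smooth (fun x => s * x).
Proof.
  intros n x. apply ex_derive_n_ext with (f := fun x => 0 + s*x + 0*(x*x)).
  intros; ring. apply quad_smooth.
Qed.
Lemma lin_derive s x : Derive (fun x => s * x) x = s.
Proof.
  rewrite (Derive_ext _ (fun x => 0 + s*x + 0*(x*x))); [|intros; ring].
  rewrite quad_derive; ring.
Qed.

Lemma mono_lemma xl M (V : R -> R) :
  cont_on xl V -> (forall x, xl <= x -> Rabs (V x) <= M) ->
  (forall psi x0, smooth psi -> xl < x0 ->
     loc_min_rel xl (fun x => V x - psi x) x0 -> 0 <= Derive psi x0) ->
  forall a b, xl <= a -> a <= b -> V a <= V b.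
Proof.
  intros Hc Hb Hs a b Ha Hab.
  destruct (Rle_or_lt (V a) (V b)) as [|Hlt]; auto. exfalso.
  assert (Hab' : a < b) by (destruct Hab; auto; subst; lra).
  set (s := (V b - V a) / (2 * (b - a))).
  assert (Hs0 : s < 0).
  { unfold s. apply Rdiv_neg_pos; lra. }
  assert (Hsb : s * (b - a) = (V b - V a)/2).
  { unfold s; field; lra. }
  set (f := fun x => extf xl V x - s * x).
  set (B := b + 2*M/(-s) + 1).
  assert (HM : 0 <= M) by (specialize (Hb a Ha); pose proof (Rabs_pos (V a)); lra).
  assert (HB1 : b < B).
  { unfold B. assert (0 <= 2*M/(-s)) by (apply Rdiv_le_0_compat; lra). lra. }
  assert (HB2 : -s * (B - a) > 2 * M).
  { unfold B. replace (-s * (b + 2 * M / - s + 1 - a)) with (-s*(b-a) + 2*M + -s)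
      by (field; lra). nra. }
  assert (Hcf : forall c, a <= c <= B -> continuity_pt f c).
  { intros c _. unfold f. apply continuity_pt_minus. apply extf_cont; auto.
    apply continuity_pt_mult. apply continuity_pt_const; intros u w; auto.
    apply continuity_pt_id. }
  destruct (continuity_ab_min f a B ltac:(lra) Hcf) as [mx [Hmin Hmx]].
  assert (Ef : forall x, a <= x -> f x = V x - s * x).
  { intros x Hx; unfold f; rewrite extf_eq; lra. }
  assert (Hfb : f b < f a).
  { rewrite !Ef; lra. }
  assert (HfB : f a < f B).
  { rewrite !Ef by lra.
    pose proof (Rabs_le_inv _ _ (Hb B ltac:(lra))). pose proof (Rabs_le_inv _ _ (Hb a Ha)). nra. }
  assert (Hm1 : a < mx).
  { destruct (Rle_or_lt mx a); auto. assert (mx = a) by lra. subst.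
    specialize (Hmin b ltac:(lra)). lra. }
  assert (Hm2 : mx < B).
  { destruct (Rle_or_lt B mx); auto. assert (mx = B) by lra. subst.
    specialize (Hmin a ltac:(lra)). lra. }
  assert (H := Hs (fun x => s * x) mx (lin_smooth s) ltac:(lra)).
  rewrite lin_derive in H. enough (0 <= s) by lra. apply H.
  exists (Rmin (mx - a) (B - mx)). split.
  { apply Rmin_glb_lt; lra. }
  intros x Hx Hd.
  assert (Hd1 := Rlt_le_trans _ _ _ Hd (Rmin_l _ _)).
  assert (Hd2 := Rlt_le_trans _ _ _ Hd (Rmin_r _ _)).
  apply Rabs_def2 in Hd1. apply Rabs_def2 in Hd2.
  specialize (Hmin x ltac:(lra)). rewrite !Ef in Hmin by lra. lra.
Qed.

Lemma regA_lemma xl M (V : R -> R) P1 a :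
  cont_on xl V -> (forall x, xl <= x -> Rabs (V x) <= M) -> 0 < P1 -> xl <= a ->
  (forall psi x0, smooth psi -> a < x0 ->
     loc_max_rel xl (fun x => V x - psi x) x0 -> Derive psi x0 = P1 -> False) ->
  forall b, a <= b -> V b - V a <= P1 * (b - a).
Proof.
  intros Hc Hb HP Ha Hs b Hab.
  destruct (Rle_or_lt (V b - V a) (P1 * (b - a))) as [|Hlt]; auto. exfalso.
  set (g := fun x => extf xl V x - P1 * x).
  set (B := b + 2*M/P1 + 1).
  assert (HM : 0 <= M) by (specialize (Hb a Ha); pose proof (Rabs_pos (V a)); lra).
  assert (HB1 : b < B).
  { unfold B. assert (0 <= 2*M/P1) by (apply Rdiv_le_0_compat; lra). lra. }
  assert (HB2 : P1 * (B - a) > 2 * M).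
  { unfold B. replace (P1 * (b + 2 * M / P1 + 1 - a)) with (P1*(b-a) + 2*M + P1)
      by (field; lra). assert (0 <= P1 * (b-a)) by (apply Rmult_le_pos; lra). lra. }
  assert (Hcf : forall c, a <= c <= B -> continuity_pt g c).
  { intros c _. unfold g. apply continuity_pt_minus. apply extf_cont; auto.
    apply continuity_pt_mult. apply continuity_pt_const; intros u w; auto.
    apply continuity_pt_id. }
  destruct (continuity_ab_maj g a B ltac:(lra) Hcf) as [mx [Hmax Hmx]].
  assert (Ef : forall x, a <= x -> g x = V x - P1 * x).
  { intros x Hx; unfold g; rewrite extf_eq; lra. }
  assert (Hfb : g a < g b).
  { rewrite !Ef; lra. }
  assert (HfB : g B < g a).
  { rewrite !Ef by lra.
    pose proof (Rabs_le_inv _ _ (Hb B ltac:(lra))). pose proof (Rabs_le_inv _ _ (Hb a Ha)). nra. }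
  assert (Hm1 : a < mx).
  { destruct (Rle_or_lt mx a); auto. assert (mx = a) by lra. subst.
    specialize (Hmax b ltac:(lra)). lra. }
  assert (Hm2 : mx < B).
  { destruct (Rle_or_lt B mx); auto. assert (mx = B) by lra. subst.
    specialize (Hmax a ltac:(lra)). lra. }
  apply (Hs (fun x => P1 * x) mx (lin_smooth P1) Hm1); [| apply lin_derive].
  exists (Rmin (mx - a) (B - mx)). split.
  { apply Rmin_glb_lt; lra. }
  intros x Hx Hd.
  assert (Hd1 := Rlt_le_trans _ _ _ Hd (Rmin_l _ _)).
  assert (Hd2 := Rlt_le_trans _ _ _ Hd (Rmin_r _ _)).
  apply Rabs_def2 in Hd1. apply Rabs_def2 in Hd2.
  specialize (Hmax x ltac:(lra)). rewrite !Ef in Hmax by lra. lra.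
Qed.

Definition qpos (a x : R) := ((Rabs (a - x) + (a - x)) / 2) * ((Rabs (a - x) + (a - x)) / 2).

Lemma qpos_le a x : qpos a x <= (a - x) * (a - x).
Proof. unfold qpos, Rabs; destruct (Rcase_abs (a - x)); nra. Qed.
Lemma qpos_left a x : x <= a -> qpos a x = (a - x) * (a - x).
Proof. intros; unfold qpos; rewrite Rabs_right by lra; field. Qed.
Lemma qpos_right a x : a <= x -> qpos a x = 0.
Proof. intros; unfold qpos; rewrite Rabs_left1 by lra; field. Qed.

Lemma qpos_cont a x : continuity_pt (qpos a) x.
Proof.
  unfold qpos.
  assert (H : continuity_pt (fun x => (Rabs (a - x) + (a - x)) / 2) x).
  { apply continuity_pt_mult.
    - apply continuity_pt_plus.
      + apply (continuity_pt_comp (fun x => a - x) Rabs).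
        * apply continuity_pt_minus. apply continuity_pt_const; intros u w; auto.
          apply continuity_pt_id.
        * apply Rcontinuity_abs.
      + apply continuity_pt_minus. apply continuity_pt_const; intros u w; auto.
        apply continuity_pt_id.
    - apply continuity_pt_const; intros u w; auto. }
  apply continuity_pt_mult; exact H.
Qed.

Lemma regB_lemma xl M (V : R -> R) P2 b0 :
  cont_on xl V -> (forall x, xl <= x -> Rabs (V x) <= M) ->
  (forall psi x0, smooth psi -> xl < x0 -> x0 <= b0 ->
     loc_min_rel xl (fun x => V x - psi x) x0 -> Derive psi x0 <= P2) ->
  forall a b, xl < a -> a <= b -> b <= b0 -> V b - V a <= P2 * (b - a).
Proof.
  intros Hc Hb Hs a b Ha Hab Hb0.
  destruct (Rle_or_lt (V b - V a) (P2 * (b - a))) as [|Hlt]; auto. exfalso.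
  assert (Hab' : a < b) by (destruct Hab; auto; subst; lra).
  set (s := (V b - V a) / (b - a)).
  assert (HsP : P2 < s).
  { unfold s. apply Rmult_lt_reg_r with (b - a); [lra|].
    unfold Rdiv; rewrite Rmult_assoc, Rinv_l, Rmult_1_r; lra. }
  set (g := fun x => extf xl V x - s * x).
  set (al := (xl + a) / 2).
  assert (Ef : forall x, xl <= x -> g x = V x - s * x).
  { intros x Hx; unfold g; rewrite extf_eq; lra. }
  assert (Hgab : g a = g b).
  { rewrite !Ef by lra. unfold s. field. lra. }
  set (K := (Rabs (g a - g al) + 1) / ((a - al) * (a - al))).
  assert (HK : K * ((a - al) * (a - al)) = Rabs (g a - g al) + 1).
  { unfold K. field. unfold al; lra. }
  assert (HK0 : 0 <= K).
  { unfold K. apply Rdiv_le_0_compat. pose proof (Rabs_pos (g a - g al)); lra.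
    assert (0 < a - al) by (unfold al; lra). nra. }
  set (Phi := fun x => g x + K * qpos a x).
  assert (Hcf : forall c, al <= c <= b -> continuity_pt Phi c).
  { intros c _. unfold Phi, g. apply continuity_pt_plus. apply continuity_pt_minus.
    apply extf_cont; auto.
    apply continuity_pt_mult. apply continuity_pt_const; intros u w; auto.
    apply continuity_pt_id.
    apply continuity_pt_mult. apply continuity_pt_const; intros u w; auto.
    apply qpos_cont. }
  assert (Hal : xl < al /\ al < a) by (unfold al; lra).
  destruct (continuity_ab_min Phi al b ltac:(lra) Hcf) as [mx [Hmin Hmx]].
  assert (HPa : Phi a = g a) by (unfold Phi; rewrite qpos_right by lra; ring).
  assert (HPb : Phi b = g b) by (unfold Phi; rewrite qpos_right by lra; ring).
  assert (HPal : Phi a < Phi al).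
  { unfold Phi at 2. rewrite qpos_left by lra. rewrite HK, HPa.
    pose proof (Rle_abs (g a - g al)). lra. }
  set (m := if Req_EM_T mx b then a else mx).
  assert (Hmin' : forall c, al <= c <= b -> Phi m <= Phi c).
  { intros c Hc'. unfold m; destruct (Req_EM_T mx b).
    - rewrite HPa, Hgab, <- HPb, <- e. apply Hmin; auto.
    - apply Hmin; auto. }
  assert (Hm : al < m < b).
  { unfold m; destruct (Req_EM_T mx b). lra.
    split.
    - destruct (Rle_or_lt mx al); auto. assert (mx = al) by lra. subst.
      specialize (Hmin a ltac:(lra)). lra.
    - destruct Hmx; destruct (Rle_or_lt b mx); try lra. }
  destruct (Rle_or_lt m a) as [Hma|Hma].
  -
    set (psi := fun x => (- K * a * a) + (s + 2 * K * a) * x + (- K) * (x * x)).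
    assert (HD : Derive psi m = s + 2 * K * (a - m)).
    { unfold psi; rewrite quad_derive; ring. }
    assert (Hle := Hs psi m (quad_smooth _ _ _) ltac:(lra) ltac:(lra)).
    assert (P2 < Derive psi m).
    { rewrite HD. assert (0 <= 2 * K * (a - m)) by (apply Rmult_le_pos; lra). lra. }
    enough (Derive psi m <= P2) by lra. apply Hle.
    exists (Rmin (m - al) (b - m)). split.
    { apply Rmin_glb_lt; lra. }
    intros x Hx Hd.
    assert (Hd1 := Rlt_le_trans _ _ _ Hd (Rmin_l _ _)).
    assert (Hd2 := Rlt_le_trans _ _ _ Hd (Rmin_r _ _)).
    apply Rabs_def2 in Hd1. apply Rabs_def2 in Hd2.
    specialize (Hmin' x ltac:(lra)). unfold Phi in Hmin'.
    rewrite (qpos_left a m) in Hmin' by lra.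
    rewrite !Ef in Hmin' by lra.
    pose proof (qpos_le a x).
    assert (K * qpos a x <= K * ((a - x) * (a - x))) by (apply Rmult_le_compat_l; lra).
    unfold psi. nra.
  -
    assert (Hle := Hs (fun x => s * x) m (lin_smooth s) ltac:(lra) ltac:(lra)).
    rewrite lin_derive in Hle.
    enough (s <= P2) by lra. apply Hle.
    exists (Rmin (m - a) (b - m)). split.
    { apply Rmin_glb_lt; lra. }
    intros x Hx Hd.
    assert (Hd1 := Rlt_le_trans _ _ _ Hd (Rmin_l _ _)).
    assert (Hd2 := Rlt_le_trans _ _ _ Hd (Rmin_r _ _)).
    apply Rabs_def2 in Hd1. apply Rabs_def2 in Hd2.
    specialize (Hmin' x ltac:(lra)). unfold Phi in Hmin'.
    rewrite !qpos_right in Hmin' by lra.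
    rewrite !Ef in Hmin' by lra. lra.
Qed.

Lemma exp_le' x y : x <= y -> exp x <= exp y.
Proof. intros [H|H]; [left; apply exp_increasing; auto| subst; lra]. Qed.

Lemma pbound gamma K0 e0 e p : 1 < gamma -> 0 < e0 -> e0 <= e -> 0 <= K0 ->
  exp (gamma * Rabs (ln (2 * (gamma / (gamma - 1)) / e0))) + 2 * K0 / e0 + 1 < p ->
  K0 < e * p + gamma / (1 - gamma) * powp p (1 - 1 / gamma).
Proof.
  intros Hg He0 He HK Hp.
  set (C := gamma / (gamma - 1)).
  assert (HC : 0 < C) by (unfold C; apply Rdiv_lt_0_compat; lra).
  set (L := ln (2 * C / e0)).
  assert (H2K : 0 <= 2 * K0 / e0) by (apply Rdiv_le_0_compat; lra).
  pose proof (exp_pos (gamma * Rabs L)).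
  fold C in Hp. fold L in Hp. assert (Hp0 : 0 < p) by lra.
  assert (Hlnp : gamma * Rabs L < ln p).
  { rewrite <- (ln_exp (gamma * Rabs L)). apply ln_increasing; lra. }
  assert (HL : L <= ln p / gamma).
  { pose proof (Rle_abs L). apply Rmult_le_reg_l with gamma; [lra|].
    replace (gamma * (ln p / gamma)) with (ln p) by (field; lra).
    assert (gamma * L <= gamma * Rabs L) by (apply Rmult_le_compat_l; lra). lra. }
  unfold powp. destruct (Req_EM_T p 0) as [E|_]; [lra|]. unfold Rpower.
  assert (Hexp : exp ((1 - 1 / gamma) * ln p) <= p * (e0 / (2 * C))).
  { replace ((1 - 1/gamma) * ln p) with (ln p + - (ln p / gamma)) by (field; lra).
    rewrite exp_plus, exp_ln by lra.
    apply Rmult_le_compat_l; [lra|].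
    replace (e0 / (2 * C)) with (exp (- L)).
    - apply exp_le'. lra.
    - unfold L. rewrite exp_Ropp, exp_ln.
      + field. lra.
      + apply Rdiv_lt_0_compat; lra. }
  assert (Hgg : gamma / (1 - gamma) = - C) by (unfold C; field; lra).
  rewrite Hgg.
  assert (C * exp ((1 - 1 / gamma) * ln p) <= p * e0 / 2).
  { apply Rle_trans with (C * (p * (e0 / (2 * C)))).
    apply Rmult_le_compat_l; lra. right; field; lra. }
  assert (e0 * p <= e * p) by (apply Rmult_le_compat_r; lra).
  assert (2 * K0 < p * e0).
  { assert (Hq : 2 * K0 / e0 < p) by lra.
    apply Rmult_lt_compat_r with (r := e0) in Hq; [|lra].
    unfold Rdiv in Hq; rewrite Rmult_assoc, Rinv_l, Rmult_1_r in Hq; lra. }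
  lra.
Qed.

Lemma p1fact gamma K0 : 1 < gamma -> 0 <= K0 ->
  let P1 := exp (ln ((K0 + 1) / (gamma / (gamma - 1))) / (1 - 1 / gamma)) in
  0 < P1 /\ gamma / (1 - gamma) * powp P1 (1 - 1 / gamma) = - (K0 + 1).
Proof.
  intros Hg HK P1.
  assert (HC : 0 < gamma / (gamma - 1)) by (apply Rdiv_lt_0_compat; lra).
  assert (HP : 0 < P1) by apply exp_pos.
  split; auto.
  unfold powp. destruct (Req_EM_T P1 0) as [E|_]; [lra|]. unfold Rpower, P1.
  rewrite ln_exp.
  assert (1 - 1/gamma <> 0).
  { intro E. assert (1/gamma < 1). { apply Rmult_lt_reg_r with gamma; [lra|].
      unfold Rdiv; rewrite Rmult_assoc, Rinv_l; lra. } lra. }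
  replace ((1 - 1 / gamma) * (ln ((K0 + 1) / (gamma / (gamma - 1))) / (1 - 1 / gamma)))
    with (ln ((K0 + 1) / (gamma / (gamma - 1)))) by (field; lra).
  rewrite exp_ln. field; lra.
  apply Rdiv_lt_0_compat; lra.
Qed.

Lemma super_fact rho r gamma xl y lam v M j :
  0 < rho -> 0 <= lam j ->
  (forall j x, xl <= x -> Rabs (v j x) <= M) ->
  constrained_visc_sol rho r gamma xl y lam v ->
  forall psi x0, smooth psi -> xl < x0 -> loc_min_rel xl (fun x => v j x - psi x) x0 ->
  0 <= Derive psi x0 /\
  (r * x0 + y j) * Derive psi x0 + gamma / (1 - gamma) * powp (Derive psi x0) (1 - 1/gamma)
    <= rho * M + 2 * lam j * M.
Proof.
  intros Hr Hl HM [_ [[_ Hs] _]] psi x0 Hp Hx Hm.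
  specialize (Hs psi j x0 Hp Hx Hm). unfold Ham in Hs.
  destruct (Rle_dec 0 (Derive psi x0)) as [H0|H0]; simpl in Hs; [|contradiction].
  split; auto.
  pose proof (Rabs_le_inv _ _ (HM j x0 ltac:(lra))).
  pose proof (Rabs_le_inv _ _ (HM (negb j) x0 ltac:(lra))).
  assert (lam j * (v (negb j) x0 - v j x0) >= lam j * (- 2 * M)).
  { apply Rle_ge, Rmult_le_compat_l; lra. }
  assert (rho * v j x0 <= rho * M) by (apply Rmult_le_compat_l; lra).
  lra.
Qed.

Lemma sub_fact rho r gamma xl y lam v M j :
  0 < rho -> 0 <= lam j ->
  (forall j x, xl <= x -> Rabs (v j x) <= M) ->
  constrained_visc_sol rho r gamma xl y lam v ->
  forall psi x0, smooth psi -> xl <= x0 -> loc_max_rel xl (fun x => v j x - psi x) x0 ->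
  0 <= Derive psi x0 ->
  - (rho * M + 2 * lam j * M) <=
  (r * x0 + y j) * Derive psi x0 + gamma / (1 - gamma) * powp (Derive psi x0) (1 - 1/gamma).
Proof.
  intros Hr Hl HM [_ [_ [_ Hs]]] psi x0 Hp Hx Hm H0'.
  specialize (Hs psi j x0 Hp Hx Hm). unfold Ham in Hs.
  destruct (Rle_dec 0 (Derive psi x0)) as [H0|H0]; simpl in Hs; [|contradiction].
  pose proof (Rabs_le_inv _ _ (HM j x0 ltac:(lra))).
  pose proof (Rabs_le_inv _ _ (HM (negb j) x0 ltac:(lra))).
  assert (lam j * (v (negb j) x0 - v j x0) <= lam j * (2 * M)).
  { apply Rmult_le_compat_l; lra. }
  assert (rho * (- M) <= rho * v j x0) by (apply Rmult_le_compat_l; lra).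
  lra.
Qed.

Lemma le_eps x y : (forall eta, 0 < eta -> x <= y + eta) -> x <= y.
Proof.
  intros H. destruct (Rle_or_lt x y); auto.
  specialize (H ((x - y)/2) ltac:(lra)). lra.
Qed.

Lemma regB_full xl M (V : R -> R) P2 b0 :
  0 <= P2 ->
  cont_on xl V -> (forall x, xl <= x -> Rabs (V x) <= M) ->
  (forall psi x0, smooth psi -> xl < x0 -> x0 <= b0 ->
     loc_min_rel xl (fun x => V x - psi x) x0 -> Derive psi x0 <= P2) ->
  forall a b, xl <= a -> a <= b -> b <= b0 -> V b - V a <= P2 * (b - a).
Proof.
  intros HP Hc Hb Hs a b Ha Hab Hb0.
  destruct Ha as [Ha|Ha]; [eapply regB_lemma; eauto|]. subst a.
  destruct Hab as [Hab|Hab]; [|subst; lra].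
  apply le_eps. intros eta Heta.
  destruct (Hc xl (Rle_refl _) eta Heta) as [d [Hd H]].
  set (a := xl + Rmin d (b - xl) / 2).
  assert (0 < Rmin d (b - xl)) by (apply Rmin_glb_lt; lra).
  pose proof (Rmin_l d (b - xl)). pose proof (Rmin_r d (b - xl)).
  assert (Ha : xl < a < b) by (unfold a; lra).
  assert (Hva : Rabs (V a - V xl) < eta).
  { apply H. lra. rewrite Rabs_right; unfold a; lra. }
  pose proof (Rabs_le_inv _ _ (Rlt_le _ _ Hva)).
  assert (V b - V a <= P2 * (b - a)) by (eapply regB_lemma; eauto; lra).
  assert (P2 * (b - a) <= P2 * (b - xl)) by (apply Rmult_le_compat_l; lra).
  lra.
Qed.

Lemma glue xl (f : R -> R) L1 L2 z1 z2 :
  0 <= L1 -> 0 <= L2 -> z1 < z2 ->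
  (forall a b, xl <= a -> a <= b -> f a <= f b) ->
  (forall a b, xl <= a -> a <= b -> b <= z2 -> f b - f a <= L1 * (b - a)) ->
  (forall a b, xl <= a -> z1 <= a -> a <= b -> f b - f a <= L2 * (b - a)) ->
  forall a b, xl <= a -> a <= b -> f b - f a <= (L1 + L2) * (b - a).
Proof.
  intros H1 H2 Hz Hm HA HB a b Ha Hab.
  assert (0 <= L1 * (b - a)) by (apply Rmult_le_pos; lra).
  assert (0 <= L2 * (b - a)) by (apply Rmult_le_pos; lra).
  destruct (Rle_or_lt b z2) as [Hb|Hb].
  { specialize (HA a b Ha Hab Hb). lra. }
  destruct (Rle_or_lt z1 a) as [Hza|Hza].
  { specialize (HB a b Ha Hza Hab). lra. }
  specialize (HA a z1 Ha ltac:(lra) ltac:(lra)).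
  specialize (HB z1 b ltac:(lra) ltac:(lra) ltac:(lra)).
  assert (L1 * (z1 - a) <= L1 * (b - a)) by (apply Rmult_le_compat_l; lra).
  assert (L2 * (b - z1) <= L2 * (b - a)) by (apply Rmult_le_compat_l; lra).
  lra.
Qed.

Lemma lip_from xl (f : R -> R) L :
  (forall a b, xl <= a -> a <= b -> f a <= f b) ->
  (forall a b, xl <= a -> a <= b -> f b - f a <= L * (b - a)) ->
  lipschitz_on xl f.
Proof.
  intros Hm HL. exists L. intros x x' Hx Hx'.
  destruct (Rle_or_lt x x') as [H|H].
  - specialize (Hm x x' Hx H). specialize (HL x x' Hx H).
    rewrite Rabs_left1 by lra. rewrite Rabs_left1 by lra. lra.
  - specialize (Hm x' x Hx' ltac:(lra)). specialize (HL x' x Hx' ltac:(lra)).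
    rewrite Rabs_right by lra. rewrite Rabs_right by lra. lra.
Qed.

Theorem mainTheorem6 (rho r gamma xl : R) (y lam : bool -> R) (v : bool -> R -> R) :
  0 < rho -> r < rho ->
  0 < y true -> y true < y false ->
  1 < gamma ->
  xl <= 0 -> 0 < rho * xl + y true -> 0 < rho * xl + y false ->
  0 <= lam true -> 0 <= lam false ->
  bounded_on xl v ->
  constrained_visc_sol rho r gamma xl y lam v ->
  forall j : bool, lipschitz_on xl (v j).
Proof.
  intros Hrho Hr Hy1 Hy2 Hg Hxl Hx1 Hx2 Hl1 Hl2 [M HM] Hsol j.
  assert (Hlj : 0 <= lam j) by (destruct j; auto).
  assert (Hyj : 0 < y j) by (destruct j; lra).
  assert (Hxj : 0 < rho * xl + y j) by (destruct j; lra).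
  assert (HM0 : 0 <= M) by (pose proof (HM j xl (Rle_refl _)); pose proof (Rabs_pos (v j xl)); lra).
  assert (HM' : forall j x, xl <= x -> Rabs (v j x) <= M) by (intros; apply HM; auto).
  set (K0 := rho * M + 2 * lam j * M).
  assert (HK0 : 0 <= K0).
  { unfold K0. assert (0 <= rho * M) by (apply Rmult_le_pos; lra).
    assert (0 <= lam j * M) by (apply Rmult_le_pos; lra). lra. }
  assert (Hcont : cont_on xl (v j)) by (destruct Hsol as [Hc _]; apply Hc).
  pose proof (super_fact rho r gamma xl y lam v M j Hrho Hlj HM' Hsol) as Hsup.
  pose proof (sub_fact rho r gamma xl y lam v M j Hrho Hlj HM' Hsol) as Hsub.
  fold K0 in Hsup, Hsub.
  assert (Hmono := mono_lemma xl M (v j) Hcont (HM' j)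
    (fun psi x0 Hp Hx Hm => proj1 (Hsup psi x0 Hp Hx Hm))).
  set (C := gamma / (gamma - 1)).
  assert (HBhyp : forall e0 b0, 0 < e0 -> (forall x, xl < x -> x <= b0 -> e0 <= r * x + y j) ->
     forall psi x0, smooth psi -> xl < x0 -> x0 <= b0 ->
     loc_min_rel xl (fun x => v j x - psi x) x0 ->
     Derive psi x0 <= exp (gamma * Rabs (ln (2 * C / e0))) + 2 * K0 / e0 + 1).
  { intros e0 b0 He0 He psi x0 Hp Hx Hxb Hm.
    destruct (Rle_or_lt (Derive psi x0) (exp (gamma * Rabs (ln (2 * C / e0))) + 2 * K0 / e0 + 1))
      as [|Hlt]; auto. exfalso.
    destruct (Hsup psi x0 Hp Hx Hm) as [_ Hs].
    pose proof (pbound gamma K0 e0 (r * x0 + y j) (Derive psi x0) Hg He0 (He x0 Hx Hxb) HK0 Hlt).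
    lra. }
  assert (HP2 : forall e0, 0 < e0 -> 0 <= exp (gamma * Rabs (ln (2 * C / e0))) + 2 * K0 / e0 + 1).
  { intros e0 He0. pose proof (exp_pos (gamma * Rabs (ln (2 * C / e0)))).
    assert (0 <= 2 * K0 / e0) by (apply Rdiv_le_0_compat; lra). lra. }
  destruct (Rle_or_lt 0 r) as [Hr0|Hr0].
  - set (e0 := r * xl + y j).
    assert (He0 : 0 < e0).
    { unfold e0. assert (0 <= (r - rho) * xl) by nra. nra. }
    apply lip_from with (L := exp (gamma * Rabs (ln (2 * C / e0))) + 2 * K0 / e0 + 1); auto.
    intros a b Ha Hab.
    apply (regB_full xl M (v j) _ b (HP2 e0 He0) Hcont (HM' j)); auto; try lra.
    apply HBhyp; auto.
    intros x Hx _. unfold e0. assert (r * xl <= r * x) by (apply Rmult_le_compat_l; lra). lra.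
  - destruct (p1fact gamma K0 Hg HK0) as [HP1 HP1e].
    set (P1 := exp (ln ((K0 + 1) / (gamma / (gamma - 1))) / (1 - 1 / gamma))) in *.
    set (eps := 1 / (2 * P1)).
    assert (Heps : 0 < eps) by (unfold eps; apply Rdiv_lt_0_compat; lra).
    assert (HepsP : eps * P1 = 1/2) by (unfold eps; field; lra).
    set (z1 := (eps - y j) / r).
    set (z2 := (eps / 2 - y j) / r).
    assert (Hz1 : r * z1 = eps - y j) by (unfold z1; field; lra).
    assert (Hz2 : r * z2 = eps / 2 - y j) by (unfold z2; field; lra).
    assert (Hz : z1 < z2).
    { destruct (Rle_or_lt z2 z1) as [H|H]; auto.
      assert (r * z1 <= r * z2) by (apply Rmult_le_compat_neg_l; lra). lra. }
    set (P2 := exp (gamma * Rabs (ln (2 * C / (eps / 2)))) + 2 * K0 / (eps / 2) + 1).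
    apply lip_from with (L := P2 + P1); auto.
    apply (glue xl (v j) P2 P1 z1 z2); auto.
    + apply HP2; lra.
    + lra.
    + intros a b Ha Hab Hb.
      apply (regB_full xl M (v j) _ z2 (HP2 (eps/2) ltac:(lra)) Hcont (HM' j)); auto; try lra.
      apply HBhyp; [lra|].
      intros x Hx Hxz. assert (r * z2 <= r * x) by nra. lra.
    + intros a b Ha Hza Hab.
      apply (regA_lemma xl M (v j) P1 a Hcont (HM' j) HP1 Ha); auto.
      intros psi x0 Hp Hx Hm HD.
      assert (Hs := Hsub psi x0 Hp ltac:(lra) Hm ltac:(lra)).
      rewrite HD, HP1e in Hs.
      assert (r * x0 <= r * z1) by nra.
      assert ((r * x0 + y j) * P1 <= eps * P1) by (apply Rmult_le_compat_r; lra).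
      lra.
Qed.
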